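(* Let $T=(T,\eta,\mu)$ be a monad on a category $\mathcal{A}$ and $X$ an object of $\mathcal{A}$. (i) If $a\colon T(X)\to X$ is a $T$-algebra and $b\colon X\to T(X)$ is a $\overline{T}$-coalgebra (basis) on $a$, then $b$ is an equaliser in $\mathcal{A}$ of the pair $T(b),T(\eta_X)\colon T(X)\rightrightarrows T^2(X)$. (ii) Conversely, if $c\colon X\to T(X)$ is a map that is an equaliser of $T(c),T(\eta_X)\colon T(X)\rightrightarrows T^2(X)$, then there is a unique map $a\colon T(X)\to X$ with $c\circ a=\mu_X\circ T(c)$, this $a$ is a $T$-algebra, and $c$ is a $\overline{T}$-coalgebra on $a$. Thus pairs (algebra $a$, basis $b$ on $a$) on $X$ correspond bijectively to maps $c\colon X\to T(X)$ that equalise $T(c)$ and $T(\eta_X)$ universally, via $(a,b)\mapsto b$.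
   Context: For a monad $T=(T,\eta,\mu)$ on $\mathcal{A}$, an Eilenberg–Moore algebra is $a\colon T(X)\to X$ with $a\circ\eta_X=\mathrm{id}$ and $a\circ\mu_X=a\circ T(a)$. The induced comonad $\overline{T}$ on the category of algebras sends $a$ to the free algebra $\mu_X\colon T^2X\to TX$, with counit $a$ and comultiplication $T(\eta_X)$. A $\overline{T}$-coalgebra (basis) on the algebra $a\colon TX\to X$ is a map $b\colon X\to TX$ in $\mathcal{A}$ satisfying $b\circ a=\mu_X\circ T(b)$, $a\circ b=\mathrm{id}_X$ and $T(\eta_X)\circ b=T(b)\circ b$. *)

(* Defs.v *)
Set Implicit Arguments.
Unset Strict Implicit.

Record Category := {
  Ob :> Type;
  Hom : Ob -> Ob -> Type;
  idm : forall A : Ob, Hom A A;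
  comp : forall {A B C : Ob}, Hom B C -> Hom A B -> Hom A C;
  comp_assoc : forall A B C D (f : Hom C D) (g : Hom B C) (h : Hom A B),
      comp f (comp g h) = comp (comp f g) h;
  comp_id_l : forall A B (f : Hom A B), comp (idm B) f = f;
  comp_id_r : forall A B (f : Hom A B), comp f (idm A) = f
}.

Arguments Hom {c} _ _.
Arguments idm {c} _.
Arguments comp {c A B C} _ _.

Notation "g ∘ f" := (comp g f) (at level 40, left associativity).

Record EndoFunctor (C : Category) := {
  fobj :> Ob C -> Ob C;
  fmap : forall {A B : Ob C}, Hom A B -> Hom (fobj A) (fobj B);
  fmap_id : forall A : Ob C, fmap (idm A) = idm (fobj A);
  fmap_comp : forall A B D (g : Hom B D) (f : Hom A B),
      fmap (g ∘ f) = fmap g ∘ fmap f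
}.

Arguments fmap {C} e {A B} _.

Record Monad (C : Category) := {
  mT :> EndoFunctor C;
  eta : forall X : Ob C, Hom X (mT X);
  mu : forall X : Ob C, Hom (mT (mT X)) (mT X);
  eta_nat : forall A B (f : Hom A B), fmap mT f ∘ eta A = eta B ∘ f;
  mu_nat : forall A B (f : Hom A B),
      fmap mT f ∘ mu A = mu B ∘ fmap mT (fmap mT f);
  mu_assoc : forall X, mu X ∘ fmap mT (mu X) = mu X ∘ mu (mT X);
  mu_eta_l : forall X, mu X ∘ eta (mT X) = idm (mT X);
  mu_eta_r : forall X, mu X ∘ fmap mT (eta X) = idm (mT X)
}.

Arguments eta {C} m X.
Arguments mu {C} m X.

Definition is_algebra {C : Category} (T : Monad C) (X : Ob C) (a : Hom (T X) X) : Prop :=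
  a ∘ eta T X = idm X /\ a ∘ mu T X = a ∘ fmap T a.

Definition is_basis {C : Category} (T : Monad C) (X : Ob C)
    (a : Hom (T X) X) (b : Hom X (T X)) : Prop :=
  b ∘ a = mu T X ∘ fmap T b /\
  a ∘ b = idm X /\
  fmap T (eta T X) ∘ b = fmap T b ∘ b.

Definition is_equaliser {C : Category} {E Y Z : Ob C}
    (f g : Hom Y Z) (e : Hom E Y) : Prop :=
  f ∘ e = g ∘ e /\
  forall (W : Ob C) (h : Hom W Y), f ∘ h = g ∘ h ->
    exists u : Hom W E, e ∘ u = h /\ forall u' : Hom W E, e ∘ u' = h -> u' = u.

Arguments is_algebra {C} T X a.
Arguments is_basis {C} T X a b.
Arguments is_equaliser {C E Y Z} f g e.

(* Main.v *)
Require Import Defs.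

Ltac ra := repeat rewrite <- comp_assoc.

Theorem lemma2p3 (C : Category) (T : Monad C) (X : Ob C) :
  (forall (a : Hom (T X) X) (b : Hom X (T X)),
      is_algebra T X a -> is_basis T X a b ->
      is_equaliser (fmap T b) (fmap T (eta T X)) b)
  /\
  (forall c : Hom X (T X),
      is_equaliser (fmap T c) (fmap T (eta T X)) c ->
      exists a : Hom (T X) X,
        c ∘ a = mu T X ∘ fmap T c /\
        (forall a' : Hom (T X) X, c ∘ a' = mu T X ∘ fmap T c -> a' = a) /\
        is_algebra T X a /\ is_basis T X a c)
  /\
  (forall (a a' : Hom (T X) X) (b : Hom X (T X)),
      is_algebra T X a -> is_basis T X a b ->
      is_algebra T X a' -> is_basis T X a' b -> a = a').
Proof.
  split; [|split].
  - intros a b Ha [H1 [H2 H3]]. split; [symmetry; exact H3|].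
    intros W h Hh. exists (a ∘ h). split.
    + rewrite comp_assoc, H1. ra. rewrite Hh. rewrite comp_assoc, mu_eta_r, comp_id_l. reflexivity.
    + intros u' Hu. rewrite <- Hu. rewrite comp_assoc, H2, comp_id_l. reflexivity.
  - intros c [Hc Hu].
    assert (mono : forall W (u v : Hom W X), c ∘ u = c ∘ v -> u = v).
    { intros W u v E.
      assert (Heq : fmap T c ∘ (c ∘ u) = fmap T (eta T X) ∘ (c ∘ u)) by (rewrite !comp_assoc, Hc; reflexivity).
      destruct (Hu W (c ∘ u) Heq) as [w [_ Hw]].
      rewrite (Hw u eq_refl), (Hw v (eq_sym E)). reflexivity. }
    assert (Heq : fmap T c ∘ (mu T X ∘ fmap T c) = fmap T (eta T X) ∘ (mu T X ∘ fmap T c)).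
    { rewrite !comp_assoc, !mu_nat. ra. rewrite <- !fmap_comp, Hc. reflexivity. }
    destruct (Hu _ _ Heq) as [a [Ha _]].
    exists a. split; [exact Ha|].
    split; [intros a' Ha'; apply mono; rewrite Ha, Ha'; reflexivity|].
    assert (Hac : a ∘ c = idm X).
    { apply mono. rewrite comp_assoc, Ha, comp_id_r. ra. rewrite Hc.
      rewrite comp_assoc, mu_eta_r, comp_id_l. reflexivity. }
    split; [split|split; [exact Ha| split; [exact Hac| symmetry; exact Hc]]].
    + apply mono. rewrite comp_assoc, Ha, comp_id_r. ra. rewrite eta_nat.
      rewrite comp_assoc, mu_eta_l, comp_id_l. reflexivity.
    + apply mono. rewrite !comp_assoc, Ha. ra. rewrite mu_nat.
      rewrite comp_assoc, <- mu_assoc. ra. rewrite <- (fmap_comp _ c a), Ha.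
      rewrite fmap_comp. reflexivity.
  - intros a a' b _ [H1 [H2 _]] _ [H1' [H2' _]].
    rewrite <- (comp_id_l a), <- H2', <- comp_assoc, H1, <- H1', comp_assoc, H2', comp_id_l.
    reflexivity.
Qed.
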